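(* Let $\mathcal{X},\mathcal{Y}$ be finite sets and $p(X,Y)$ a fully supported probability distribution on $\mathcal{X}\times\mathcal{Y}$, and let $\lambda=I(X;Y)$. Then the solutions of the IIB problem with parameter $\lambda$ are exactly the channels of the form $q(t|x,y)=\gamma(t\mid\pi(x,y))$ for a congruent channel $\gamma\in C(\{1,\dots,n\},\mathcal{T})$.
   Context: $\mathcal{T}:=\mathbb{N}$; $C(\mathcal{A},\mathcal{B})$ is the set of channels (conditional probabilities) from $\mathcal{A}$ to $\mathcal{B}$. For $\kappa\in C(\mathcal{X}\times\mathcal{Y},\mathcal{T})$ and a distribution $r$ on $\mathcal{X}\times\mathcal{Y}$, $\kappa(r)(t)=\sum_{x,y}\kappa(t|x,y)r(x,y)$; $I_\kappa(X,Y;T)$ is the mutual information under $p(x,y)\kappa(t|x,y)$; $D$ is the KL divergence. The IIB problem with parameter $\lambda\in[0,I(X;Y)]$: minimise $I_\kappa(X,Y;T)$ over $\kappa\in C(\mathcal{X}\times\mathcal{Y},\mathcal{T})$ subject to $D(\kappa(p(X,Y))\|\kappa(p(X)p(Y)))=\lambda$. The equivalence relation $(x,y)\sim(x',y')$ iff $\frac{p(x,y)}{p(x)p(y)}=\frac{p(x',y')}{p(x')p(y')}$ has classes $\mathcal{S}_1,\dots,\mathcal{S}_n$ partitioning $\mathcal{X}\times\mathcal{Y}$, and $\pi:\mathcal{X}\times\mathcal{Y}\to\{1,\dots,n\}$ is the deterministic clustering $\pi(x,y)=j$ iff $(x,y)\in\mathcal{S}_j$. A channel $\gamma$ is congruent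 if for distinct inputs $a\neq a'$ the supports of $\gamma(\cdot|a)$ and $\gamma(\cdot|a')$ are disjoint. *)

(* Defs.v *)
From HB Require Import structures.
From mathcomp Require Import all_boot all_order all_algebra.
From mathcomp Require Import all_classical all_reals all_analysis.
Set Implicit Arguments. Unset Strict Implicit. Unset Printing Implicit Defensive.
Import Order.TTheory GRing.Theory Num.Theory.
Import numFieldNormedType.Exports.
Local Open Scope ring_scope.
Local Open Scope classical_set_scope.

Section IIB.
Variable R : realType.

(* A channel (conditional distribution) from A to T := nat:
   k a t = k(t|a), nonnegative, and for each a, sum_t k(t|a) = 1
   (convergent series). *)
Definition is_channel (A : Type) (k : A -> nat -> R) : Prop :=
  (forall a t, 0 <= k a t) /\
  (forall a, series (k a) @ \oo --> (1 : R)).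

Definition congruent (A : Type) (g : A -> nat -> R) : Prop :=
  forall a a', a <> a' -> forall t, g a t = 0 \/ g a' t = 0.

Definition rsum (u : nat -> R) : R := limn (series u).

Variables X Y : finType.

Definition is_distr (r : X * Y -> R) : Prop :=
  (forall z, 0 <= r z) /\ \sum_(z : X * Y) r z = 1.

Definition fully_supported (r : X * Y -> R) : Prop := forall z, 0 < r z.

Definition margX (p : X * Y -> R) (x : X) : R := \sum_(y : Y) p (x, y).
Definition margY (p : X * Y -> R) (y : Y) : R := \sum_(x : X) p (x, y).

Definition prodmarg (p : X * Y -> R) (z : X * Y) : R :=
  margX p z.1 * margY p z.2.

Definition push (k : X * Y -> nat -> R) (r : X * Y -> R) (t : nat) : R :=
  \sum_(z : X * Y) k z t * r z.

(* I(X;Y) (natural log; convention 0 log 0 = 0) *)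
Definition mutinfXY (p : X * Y -> R) : R :=
  \sum_(z : X * Y) p z * ln (p z / prodmarg p z).

Definition mutinfT (p : X * Y -> R) (k : X * Y -> nat -> R) : R :=
  rsum (fun t => \sum_(z : X * Y) p z * k z t * ln (k z t / push k p t)).

Definition KL (a b : nat -> R) : R :=
  rsum (fun t => a t * ln (a t / b t)).

Definition IIB_feasible (p : X * Y -> R) (lam : R) (k : X * Y -> nat -> R) :=
  is_channel k /\ KL (push k p) (push k (prodmarg p)) = lam.

Definition IIB_solution (p : X * Y -> R) (lam : R) (k : X * Y -> nat -> R) :=
  IIB_feasible p lam k /\
  forall k', IIB_feasible p lam k' -> mutinfT p k <= mutinfT p k'.

Definition pmi_ratio (p : X * Y -> R) (z : X * Y) : R := p z / prodmarg p z.

Definition is_class_clustering (p : X * Y -> R) (n : nat)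
    (pi : X * Y -> 'I_n) : Prop :=
  (forall j : 'I_n, exists z, pi z = j) /\
  (forall z z', pi z = pi z' <-> pmi_ratio p z = pmi_ratio p z').

End IIB.

(* Main.v *)
Require Import Defs.
From HB Require Import structures.
From mathcomp Require Import all_boot all_order all_algebra.
From mathcomp Require Import all_classical all_reals all_analysis.
From mathcomp Require Import ring lra.
Set Implicit Arguments. Unset Strict Implicit. Unset Printing Implicit Defensive.
Import Order.TTheory GRing.Theory Num.Theory.
Import numFieldNormedType.Exports.
Local Open Scope ring_scope.
Local Open Scope classical_set_scope.

Lemma ln_ge1V (R : realType) (x : R) : 0 < x -> 1 - x^-1 <= ln x.
Proof.
move=> x0; have := expR_ge1Dx (- ln x).
by rewrite expRN lnK ?posrE // lerBlDr addrC -lerBlDr.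
Qed.

Lemma ln_gt1V (R : realType) (x : R) : 0 < x -> x != 1 -> 1 - x^-1 < ln x.
Proof.
move=> x0 x1; have : - ln x != 0 by rewrite oppr_eq0 ln_eq0.
move/expR_gt1Dx.
by rewrite expRN lnK ?posrE // ltrBlDr addrC -ltrBlDr.
Qed.

Lemma lsum_pt (R : realType) (w v c : R) : 0 <= w -> 0 <= v -> (v = 0 -> w = 0) -> 0 < c ->
  0 <= w * ln (w / v) - w * ln c - (w - v * c) /\
  (w * ln (w / v) - w * ln c - (w - v * c) = 0 -> w = v * c).
Proof.
move=> w0 v0 vw c0.
have [->|wp] := eqVneq w 0.
  rewrite !mul0r !subrr !sub0r opprK; split; first by rewrite mulr_ge0 // ltW.
  by move/eqP; rewrite mulf_eq0 (gt_eqF c0) orbF => /eqP ->; rewrite mul0r.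
have wg : 0 < w by rewrite lt_def wp.
have vg : 0 < v by rewrite lt_def v0 andbT; apply/eqP => /vw /eqP; rewrite (negPf wp).
set x := w / (v * c).
have xg : 0 < x by rewrite divr_gt0 ?mulr_gt0.
have E : w * ln (w / v) - w * ln c - (w - v * c) = w * (ln x - (1 - x^-1)).
  have Lx : ln x = ln (w / v) - ln c.
    rewrite -ln_div ?posrE ?divr_gt0 // /x; by rewrite invfM mulrA.
  have Vx : x^-1 = v * c / w by rewrite /x invf_div.
  rewrite Lx Vx; field; exact: wp.
rewrite E; split.
  by apply: mulr_ge0 => //; rewrite subr_ge0 ln_ge1V.
move/eqP; rewrite mulf_eq0 (negPf wp) /= subr_eq0 => /eqP H.
have [x1|x1] := eqVneq x 1.
  by move: x1; rewrite /x => /(congr1 (fun y => y * (v * c))); rewrite mul1r mulfVK // mulf_neq0 // gt_eqF.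
by have := @ln_gt1V _ x xg x1; rewrite H ltxx.
Qed.

Lemma term_le_sum (R : realType) (I : finType) (F : I -> R) (j : I) :
  (forall i, 0 <= F i) -> F j <= \sum_i F i.
Proof. by move=> F0; rewrite (bigD1 j) //= lerDl sumr_ge0. Qed.

Lemma logsum (R : realType) (I : finType) (w v : I -> R) :
  (forall i, 0 <= w i) -> (forall i, 0 <= v i) -> (forall i, v i = 0 -> w i = 0) ->
  (\sum_i w i) * ln ((\sum_i w i) / \sum_i v i) <= \sum_i w i * ln (w i / v i) /\
  (\sum_i w i * ln (w i / v i) = (\sum_i w i) * ln ((\sum_i w i) / \sum_i v i) ->
     forall i, w i * \sum_i v i = v i * \sum_i w i).
Proof.
move=> w0 v0 vw.
set W := \sum_i w i; set V := \sum_i v i.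
have [W0|Wn0] := eqVneq W 0.
  have wz : forall i, w i = 0.
    by move=> i; apply/eqP; move/eqP: W0; rewrite psumr_eq0 // => /allP; apply; rewrite mem_index_enum.
  rewrite W0 mul0r; split.
    by rewrite big1 // => i _; rewrite wz mul0r.
  by move=> _ i; rewrite wz mul0r mulr0.
have [i0 wi0] : exists i, w i != 0.
  by move: Wn0; rewrite /W psumr_eq0 // -has_predC => /hasP [i _ wi]; exists i.
have vi0 : 0 < v i0 by rewrite lt_def v0 andbT; apply/eqP => /vw /eqP; rewrite (negPf wi0).
have Vg : 0 < V by apply: (lt_le_trans vi0); apply: term_le_sum.
have Wg : 0 < W by rewrite lt_def Wn0 sumr_ge0.
set c := W / V.
have cg : 0 < c by rewrite divr_gt0.
pose d i := w i * ln (w i / v i) - w i * ln c - (w i - v i * c).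
have dge : forall i, 0 <= d i by move=> i; case: (@lsum_pt _ _ _ _ (w0 i) (v0 i) (@vw i) cg).
have sd : \sum_i d i = \sum_i w i * ln (w i / v i) - W * ln (W / V).
  rewrite /d !sumrB -!mulr_suml -/W -/V /c [V * _]mulrC divfK ?gt_eqF // subrr subr0.
  done.
split.
  by rewrite -subr_ge0 -sd sumr_ge0.
move=> Heq i.
have : d i = 0.
  apply/eqP; move/eqP: (sd); rewrite Heq subrr psumr_eq0 // => /allP; apply.
  by rewrite mem_index_enum.
case: (@lsum_pt _ _ _ _ (w0 i) (v0 i) (@vw i) cg) => _ /[apply] ->.
by rewrite /c mulrA divfK ?gt_eqF.
Qed.
Lemma series_fsum (R : realType) (I : finType) (f : I -> nat -> R) (L : I -> R) :
  (forall i, series (f i) @ \oo --> L i) ->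
  series (fun t => \sum_i f i t) @ \oo --> \sum_i L i.
Proof.
move=> H.
have -> : series (fun t => \sum_i f i t) = (fun n => \sum_i series (f i) n).
  by apply/funext => n; rewrite /series /= exchange_big.
apply: cvg_big; last by move=> i _; exact: H.
exact: add_continuous.
Qed.

Lemma series_scale (R : realType) (a : R) (f : nat -> R) (L : R) :
  series f @ \oo --> L -> series (fun t => a * f t) @ \oo --> a * L.
Proof.
move=> H.
have -> : series (fun t => a * f t) = (fun n => a * series f n).
  by apply/funext => n; rewrite /series /= mulr_sumr.
by apply: cvgMr.
Qed.

Lemma series_lin (R : realType) (I : finType) (al : I -> R) (f : I -> nat -> R) (L : I -> R) :
  (forall i, series (f i) @ \oo --> L i) ->
  series (fun t => \sum_i al i * f i t) @ \oo --> \sum_i al i * L i.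
Proof.
move=> H; apply: series_fsum => i; exact: series_scale.
Qed.

Lemma series_ext (R : realType) (f g : nat -> R) (L : R) :
  (forall t, f t = g t) -> series f @ \oo --> L -> series g @ \oo --> L.
Proof. by move=> e; have -> : g = f by apply/funext => t; rewrite e. Qed.

Lemma series_le_lim (R : realType) (d : nat -> R) (l : R) :
  (forall t, 0 <= d t) -> series d @ \oo --> l -> forall n, series d n <= l.
Proof.
move=> d0 H n.
have -> : l = limn (series d) by apply/esym/cvg_lim.
apply: nondecreasing_cvgn_le; last by apply/cvgP: H.
exact: nondecreasing_series.
Qed.

Lemma nneg_series_ge0 (R : realType) (d : nat -> R) (l : R) :
  (forall t, 0 <= d t) -> series d @ \oo --> l -> 0 <= l.
Proof.
move=> d0 H; have := series_le_lim d0 H 0.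
by rewrite /series /= big_geq.
Qed.

Lemma nneg_series0 (R : realType) (d : nat -> R) :
  (forall t, 0 <= d t) -> series d @ \oo --> 0 -> forall t, d t = 0.
Proof.
move=> d0 H t; have := series_le_lim d0 H t.+1.
rewrite /series /= big_nat_recr //= => Hle.
apply/eqP; rewrite eq_le d0 andbT.
apply: le_trans Hle; rewrite lerDr sumr_ge0 // => i _.
Qed.

Lemma series_cmp (R : realType) (d e : nat -> R) :
  (forall t, 0 <= d t) -> (forall t, d t <= e t) -> cvgn (series e) ->
  exists l : R, series d @ \oo --> l.
Proof.
move=> d0 de ce.
have : cvgn (series d).
  apply: series_le_cvg ce => // t; exact: le_trans (d0 t) (de t).
by move=> cd; exists (limn (series d)).
Qed.

Lemma rsum_eq (R : realType) (f : nat -> R) (L : R) :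
  series f @ \oo --> L -> limn (series f) = L.
Proof. by move=> H; apply: cvg_lim. Qed.

Lemma series_sub (R : realType) (f g : nat -> R) (A B : R) :
  series f @ \oo --> A -> series g @ \oo --> B ->
  series (fun t => f t - g t) @ \oo --> A - B.
Proof.
move=> Hf Hg.
have -> : series (fun t => f t - g t) = (fun n => series f n - series g n).
  by apply/funext => n; rewrite /series /= sumrB.
exact: cvgB.
Qed.

Lemma prodmarg_pos (R : realType) (X Y : finType) (p : X * Y -> R) :
  (forall z, 0 < p z) -> forall z, 0 < prodmarg p z.
Proof.
move=> pp [x y]; rewrite /prodmarg /margX /margY /=.
have p0 : forall z, 0 <= p z by move=> z; apply/ltW.
apply: mulr_gt0.
  by apply: (lt_le_trans (pp (x, y))); apply: (@term_le_sum _ _ (fun y' => p (x, y'))).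
by apply: (lt_le_trans (pp (x, y))); apply: (@term_le_sum _ _ (fun x' => p (x', y))).
Qed.
Lemma suff (R : realType) (X Y : finType) (p : X * Y -> R) (k : X * Y -> nat -> R) :
  (forall z, 0 < p z) -> is_channel k ->
  KL (push k p) (push k (prodmarg p)) = mutinfXY p ->
  forall t z, 0 < k z t ->
    pmi_ratio p z = push k p t / push k (prodmarg p) t.
Proof.
move=> pp [k0 kc] HKL.
have mp := prodmarg_pos pp.
set m := prodmarg p in HKL mp *.
set a := push k p in HKL *; set b := push k m in HKL *.
pose c t := \sum_(z : X * Y) (p z * ln (pmi_ratio p z)) * k z t.
pose kl t := a t * ln (a t / b t).
have LS : forall t,
  (a t) * ln (a t / b t) <= c t /\ (c t = a t * ln (a t / b t) ->
     forall z, k z t * p z * b t = k z t * m z * a t).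
  move=> t.
  have h1 : forall z, 0 <= k z t * p z by move=> z; rewrite mulr_ge0 // ltW.
  have h2 : forall z, 0 <= k z t * m z by move=> z; rewrite mulr_ge0 // ltW.
  have h3 : forall z, k z t * m z = 0 -> k z t * p z = 0.
    move=> z /eqP; rewrite mulf_eq0 (gt_eqF (mp z)) orbF => /eqP ->; by rewrite mul0r.
  have [H1 H2] := logsum h1 h2 h3.
  have Ec : \sum_(z : X * Y) k z t * p z * ln (k z t * p z / (k z t * m z)) = c t.
    apply: eq_bigr => z _.
    have [->|kn] := eqVneq (k z t) 0; first by rewrite !mul0r mulr0.
    have -> : k z t * p z / (k z t * m z) = pmi_ratio p z.
      by rewrite /pmi_ratio invfM mulrACA mulfV // mul1r.
    ring.
  split; first by rewrite -Ec.
  by move=> Hc z; apply: H2; rewrite Ec.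
have D0 : forall t, 0 <= c t - kl t by move=> t; rewrite subr_ge0; case: (LS t).
have klb : forall t, a t - b t <= kl t.
  move=> t; rewrite /kl.
  have a0 : 0 <= a t by rewrite sumr_ge0 // => z _; rewrite mulr_ge0 // ltW.
  have b0 : 0 <= b t by rewrite sumr_ge0 // => z _; rewrite mulr_ge0 // ltW.
  have [->|an] := eqVneq (a t) 0; first by rewrite mul0r sub0r oppr_le0.
  have ag : 0 < a t by rewrite lt_def an a0.
  have bg : 0 < b t.
    rewrite lt_def b0 andbT; apply/eqP => bz; move/eqP: an; apply.
    rewrite /a /push big1 // => z _.
    have : k z t * m z = 0.
      by apply/eqP; move/eqP: bz; rewrite /b /push psumr_eq0 => [/allP|z' _]; [apply; rewrite mem_index_enum | rewrite mulr_ge0 // ltW].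
    by move/eqP; rewrite mulf_eq0 (gt_eqF (mp z)) orbF => /eqP ->; rewrite mul0r.
  have := ln_ge1V (divr_gt0 ag bg).
  rewrite invf_div => H.
  have := ler_wpM2l (ltW ag) H.
  by rewrite mulrBr mulr1 mulrCA mulfV ?gt_eqF // mulr1.
have Sc : series c @ \oo --> mutinfXY p.
  have -> : mutinfXY p = \sum_(z : X * Y) (p z * ln (pmi_ratio p z)) * 1.
    by apply: eq_bigr => z _; rewrite mulr1.
  exact: series_lin.
pose e t := \sum_(z : X * Y) (p z * ln (pmi_ratio p z) - p z + m z) * k z t.
have Ee : forall t, e t = c t - a t + b t.
  move=> t; rewrite /e /c /a /b /push -sumrB -big_split /=.
  by apply: eq_bigr => z _; ring.
have Se : series e @ \oo --> \sum_(z : X * Y) (p z * ln (pmi_ratio p z) - p z + m z) * 1.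
  exact: series_lin.
have [delta Sd] : exists delta : R, series (fun t => c t - kl t) @ \oo --> delta.
  apply: (@series_cmp _ _ e) => //; last by apply/cvgP: Se.
  by move=> t; rewrite Ee; have := klb t; lra.
have Skl : series kl @ \oo --> mutinfXY p - delta.
  apply: (series_ext _ (series_sub Sc Sd)) => t; ring.
have d0 : delta = 0.
  move: HKL; rewrite /KL /rsum -/kl (rsum_eq Skl); lra.
rewrite d0 in Sd.
have Dz := nneg_series0 D0 Sd.
move=> t z kz.
have [_ H] := LS t.
have E := H (subr0_eq (Dz t)) z.
have kn : k z t != 0 by rewrite gt_eqF.
have E2 : p z * b t = m z * a t.
  by apply: (mulfI kn); rewrite [LHS]mulrA [RHS]mulrA; exact: E.
have bg : 0 < b t.
  apply: (lt_le_trans (mulr_gt0 kz (mp z))).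
  by apply: (@term_le_sum _ _ (fun z => k z t * m z)) => z'; rewrite mulr_ge0 // ltW.
rewrite /pmi_ratio -/m; apply/eqP; rewrite (eqr_div _ _ (negbT (gt_eqF (mp z))) (negbT (gt_eqF bg))).
by rewrite E2 mulrC.
Qed.
Definition Pc (R : realType) (X Y : finType) (n : nat) (p : X * Y -> R)
  (pi : X * Y -> 'I_n) (z : X * Y) : R := \sum_(z' | pi z' == pi z) p z'.

Definition Hpi (R : realType) (X Y : finType) (n : nat) (p : X * Y -> R)
  (pi : X * Y -> 'I_n) : R := \sum_(z : X * Y) p z * - ln (Pc p pi z).

Lemma KT (R : realType) (X Y : finType) (n : nat) (p : X * Y -> R)
  (pi : X * Y -> 'I_n) (k : X * Y -> nat -> R) (t : nat) :
  (forall z, 0 < p z) -> (forall z, 0 <= k z t) ->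
  (forall z z', 0 < k z t -> 0 < k z' t -> pi z = pi z') ->
  let a := push k p t in
  let c := \sum_(z : X * Y) (p z * - ln (Pc p pi z)) * k z t in
  let term := \sum_(z : X * Y) p z * k z t * ln (k z t / a) in
  let u := \sum_(z : X * Y) (p z * - ln (p z)) * k z t in
  c <= term /\ term <= u /\
  (term = c -> forall z z', pi z = pi z' -> k z t = k z' t).
Proof.
move=> pp k0 cls a c term u.
case: (pickP (fun z => 0 < k z t)) => [z0 kz0 | none]; last first.
  have kz : forall z, k z t = 0.
    by move=> z; apply/eqP; rewrite eq_le k0 andbT leNgt none.
  have c0 : c = 0 by rewrite /c big1 // => z _; rewrite kz mulr0.
  have t0 : term = 0 by rewrite /term big1 // => z _; rewrite kz mulr0 mul0r.
  have u0 : u = 0 by rewrite /u big1 // => z _; rewrite kz mulr0.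
  by rewrite c0 t0 u0; split => // ; split => // _ z z' _; rewrite !kz.
set j := pi z0.
have inS : forall z, k z t != 0 -> pi z = j.
  move=> z kn; apply: cls => //; by rewrite lt_def kn k0.
have ag : 0 < a.
  apply: (lt_le_trans (mulr_gt0 kz0 (pp z0))).
  by apply: (@term_le_sum _ _ (fun z => k z t * p z)) => z'; rewrite mulr_ge0 // ltW.
set PJ := \sum_(z' | pi z' == j) p z'.
have PJg : 0 < PJ.
  apply: (lt_le_trans (pp z0)); rewrite /PJ (bigD1 z0) //= lerDl sumr_ge0 // => z _.
  exact: ltW.
pose w z := k z t * p z.
pose v z := if pi z == j then p z * a else 0.
have h1 : forall z, 0 <= w z by move=> z; rewrite mulr_ge0 // ltW.
have h2 : forall z, 0 <= v z.
  by move=> z; rewrite /v; case: ifP => // _; rewrite mulr_ge0 // ltW.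
have h3 : forall z, v z = 0 -> w z = 0.
  move=> z; rewrite /v; case: ifP => Hj.
    by move/eqP; rewrite mulf_eq0 !gt_eqF.
  move=> _; have [kz|kn] := eqVneq (k z t) 0; first by rewrite /w kz mul0r.
  by move: Hj; rewrite (inS z kn) eqxx.
have [H1 H2] := logsum h1 h2 h3.
have SW : \sum_z w z = a by [].
have SV : \sum_z v z = PJ * a.
  by rewrite /PJ mulr_suml [RHS]big_mkcond; apply: eq_bigr => z _; rewrite /v.
have ST : \sum_z w z * ln (w z / v z) = term.
  apply: eq_bigr => z _; rewrite /w /v.
  have [kz|kn] := eqVneq (k z t) 0; first by rewrite kz !mul0r mulr0 mul0r.
  rewrite (inS z kn) eqxx.
  have -> : k z t * p z / (p z * a) = k z t / a.
    by field; rewrite !gt_eqF.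
  ring.
have SC : c = a * - ln PJ.
  rewrite /c /a /push mulr_suml; apply: eq_bigr => z _.
  have [kz|kn] := eqVneq (k z t) 0; first by rewrite kz !mulr0 !mul0r.
  have -> : Pc p pi z = PJ by rewrite /Pc (inS z kn).
  ring.
have SR : (\sum_z w z) * ln ((\sum_z w z) / \sum_z v z) = c.
  rewrite SW SV SC; congr (_ * _).
  rewrite invfM mulrCA mulfV ?gt_eqF // mulr1 lnV //.
rewrite SR ST in H1 H2.
split => //; split.
  rewrite /term /u; apply: ler_sum => z _.
  have [kz|kn] := eqVneq (k z t) 0; first by rewrite kz !mulr0 !mul0r.
  have kg : 0 < k z t by rewrite lt_def kn k0.
  have le1 : k z t / a <= (p z)^-1.
    rewrite -subr_ge0.
    have -> : (p z)^-1 - k z t / a = (a - k z t * p z) / (p z * a).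
      by field; rewrite !gt_eqF.
    apply: divr_ge0; last by rewrite mulr_ge0 // ltW.
    rewrite subr_ge0.
    by apply: (@term_le_sum _ _ (fun z => k z t * p z)) => z'; rewrite mulr_ge0 // ltW.
  have : ln (k z t / a) <= - ln (p z).
    by rewrite -lnV ?posrE // ler_ln ?posrE ?divr_gt0 ?invr_gt0.
  move/(ler_wpM2l (mulr_ge0 (ltW (pp z)) (k0 z))).
  by rewrite [p z * - ln (p z) * _]mulrAC.
move=> Heq.
have E := H2 Heq.
have kc : forall z, pi z = j -> k z t = a / PJ.
  move=> z Hz; have := E z; rewrite SW SV /w /v Hz eqxx => Ez.
  have pa : p z * a != 0 by rewrite mulf_neq0 // gt_eqF.
  have E3 : (p z * a) * (k z t * PJ) = (p z * a) * a.
    by rewrite -Ez; ring.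
  apply: (mulIf (negbT (gt_eqF PJg))); rewrite divfK ?gt_eqF //.
  exact: (mulfI pa E3).
move=> z z' Hzz.
have [Hz|Hz] := eqVneq (pi z) j.
  by rewrite kc // kc // -Hzz.
have kz : k z t = 0 by apply/eqP; apply: contraR Hz => kn; rewrite (inS z kn).
have kz' : k z' t = 0 by apply/eqP; apply: contraR Hz => kn; rewrite Hzz (inS z' kn).
by rewrite kz kz'.
Qed.

Lemma series_add (R : realType) (f g : nat -> R) (A B : R) :
  series f @ \oo --> A -> series g @ \oo --> B ->
  series (fun t => f t + g t) @ \oo --> A + B.
Proof.
move=> Hf Hg.
have -> : series (fun t => f t + g t) = (fun n => series f n + series g n).
  by apply/funext => n; rewrite /series /= big_split.
exact: cvgD.
Qed.

Lemma MIN (R : realType) (X Y : finType) (n : nat) (p : X * Y -> R)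
  (pi : X * Y -> 'I_n) (k : X * Y -> nat -> R) :
  (forall z, 0 < p z) -> is_channel k ->
  (forall t z z', 0 < k z t -> 0 < k z' t -> pi z = pi z') ->
  exists delta : R, 0 <= delta /\ mutinfT p k = Hpi p pi + delta /\
    (delta = 0 -> forall t z z', pi z = pi z' -> k z t = k z' t).
Proof.
move=> pp [k0 kc] cls.
pose c t := \sum_(z : X * Y) (p z * - ln (Pc p pi z)) * k z t.
pose term t := \sum_(z : X * Y) p z * k z t * ln (k z t / push k p t).
pose u t := \sum_(z : X * Y) (p z * - ln (p z)) * k z t.
have K t := @KT R X Y n p pi k t pp (fun z => k0 z t) (cls t).
have Sc : series c @ \oo --> Hpi p pi.
  have -> : Hpi p pi = \sum_(z : X * Y) (p z * - ln (Pc p pi z)) * 1.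
    by apply: eq_bigr => z _; rewrite mulr1.
  exact: series_lin.
have Suc : series (fun t => u t - c t) @ \oo -->
   \sum_(z : X * Y) (p z * - ln (p z) - p z * - ln (Pc p pi z)) * 1.
  apply: (series_ext _ (series_lin (al := fun z => p z * - ln (p z) - p z * - ln (Pc p pi z)) kc)) => t.
  by rewrite /u /c -sumrB; apply: eq_bigr => z _; ring.
have [delta Sd] : exists delta : R, series (fun t => term t - c t) @ \oo --> delta.
  apply: (@series_cmp _ _ (fun t => u t - c t)); last by apply/cvgP: Suc.
    by move=> t; case: (K t) => H _; rewrite subr_ge0.
  by move=> t; case: (K t) => _ [H _]; rewrite lerD2r.
have d0 : forall t, 0 <= term t - c t by move=> t; case: (K t) => H _; rewrite subr_ge0.
exists delta; split; first exact: nneg_series_ge0 d0 Sd.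
split.
  rewrite /mutinfT /rsum -/term.
  apply: rsum_eq; apply: (series_ext _ (series_add Sc Sd)) => t; ring.
move=> dz; rewrite dz in Sd.
have Dz := nneg_series0 d0 Sd.
move=> t; case: (K t) => _ [_ H]; apply: H.
by apply/eqP; rewrite -subr_eq0; apply/eqP; exact: Dz.
Qed.

Lemma Pc_pos (R : realType) (X Y : finType) (n : nat) (p : X * Y -> R)
  (pi : X * Y -> 'I_n) (z : X * Y) : (forall z, 0 < p z) -> 0 < Pc p pi z.
Proof.
move=> pp; apply: (lt_le_trans (pp z)); rewrite /Pc (bigD1 z) //= lerDl sumr_ge0 // => z' _.
exact: ltW.
Qed.

Lemma GC (R : realType) (X Y : finType) (n : nat) (p : X * Y -> R)
  (pi : X * Y -> 'I_n) (g : 'I_n -> nat -> R) :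
  (forall z, 0 < p z) ->
  (forall z z', pi z = pi z' <-> pmi_ratio p z = pmi_ratio p z') ->
  is_channel g -> congruent g ->
  IIB_feasible p (mutinfXY p) (fun z t => g (pi z) t) /\
  mutinfT p (fun z t => g (pi z) t) = Hpi p pi.
Proof.
move=> pp hcl [g0 gc] gcong.
set k := fun z t => g (pi z) t.
have mp := prodmarg_pos pp.
have k0 : forall z t, 0 <= k z t by move=> z t; exact: g0.
have kc : forall z, series (k z) @ \oo --> (1 : R) by move=> z; exact: gc.
have cls : forall t z z', k z t != 0 -> k z' t != 0 -> pi z = pi z'.
  move=> t z z' kz kz'; have [//|ne] := eqVneq (pi z) (pi z').
  by case: (gcong _ _ (elimN eqP ne) t) => H; [move: kz | move: kz']; rewrite /k H eqxx.
split; last first.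
  rewrite /mutinfT /rsum; apply: rsum_eq.
  have -> : Hpi p pi = \sum_(z : X * Y) (p z * - ln (Pc p pi z)) * 1.
    by apply: eq_bigr => z _; rewrite mulr1.
  apply: (series_ext _ (series_lin kc)) => t.
  apply: eq_bigr => z _.
  have [kz|kn] := eqVneq (k z t) 0; first by rewrite kz !mulr0 !mul0r.
  have -> : push k p t = k z t * Pc p pi z.
    rewrite /push /Pc mulr_sumr [RHS]big_mkcond; apply: eq_bigr => z' _.
    case: ifP => [/eqP Hz|Hz].
      by rewrite /k Hz.
    have [kz'|kn'] := eqVneq (k z' t) 0; first by rewrite kz' mul0r.
    by move: Hz; rewrite (cls t z' z kn' kn) eqxx.
  have Pg := Pc_pos pi z pp.
  have -> : k z t / (k z t * Pc p pi z) = (Pc p pi z)^-1.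
    by field; apply/andP; split; [exact: (negbT (gt_eqF Pg)) | exact: kn].
  rewrite lnV ?posrE //; ring.
split; first by split.
rewrite /KL /rsum; apply: rsum_eq.
have -> : mutinfXY p = \sum_(z : X * Y) (p z * ln (pmi_ratio p z)) * 1.
  by apply: eq_bigr => z _; rewrite mulr1.
apply: (series_ext _ (series_lin kc)) => t.
rewrite /push mulr_suml; apply: eq_bigr => z _.
have [kz|kn] := eqVneq (k z t) 0; first by rewrite kz !mulr0 !mul0r.
set m := prodmarg p.
have bg : 0 < \sum_(z0 : X * Y) k z0 t * m z0.
  have kg : 0 < k z t by rewrite lt_def kn k0.
  apply: (lt_le_trans (mulr_gt0 kg (mp z))).
  by apply: (@term_le_sum _ _ (fun z => k z t * m z)) => z'; rewrite mulr_ge0 // ltW.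
have -> : \sum_(z0 : X * Y) k z0 t * p z0 =
          pmi_ratio p z * \sum_(z0 : X * Y) k z0 t * m z0.
  rewrite mulr_sumr; apply: eq_bigr => z' _.
  have [kz'|kn'] := eqVneq (k z' t) 0; first by rewrite kz' !mul0r mulr0.
  have E : pmi_ratio p z' = pmi_ratio p z by apply/hcl/(cls t z' z kn' kn).
  rewrite -E /pmi_ratio -/m; field; exact: (negbT (gt_eqF (mp z'))).
rewrite mulfK ?gt_eqF //; ring.
Qed.

Lemma ind_channel (R : realType) (n : nat) :
  is_channel (fun (j : 'I_n) (t : nat) => ((t == j)%:R : R)).
Proof.
split; first by move=> j t; rewrite ler0n.
move=> j; apply: cvg_near_cst.
have S : forall m, \sum_(0 <= t < m) ((t == j)%:R : R) = (j < m)%:R.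
  elim=> [|m IH]; first by rewrite big_geq.
  rewrite big_nat_recr //= IH ltnS.
  have [h|h|h] := ltngtP j m.
  - by rewrite /= addr0.
  - by rewrite /= addr0.
  - by rewrite /= add0r.
exists j.+1 => // m /= Hm.
by rewrite /series /= S Hm.
Qed.

Lemma ind_congruent (R : realType) (n : nat) :
  congruent (fun (j : 'I_n) (t : nat) => ((t == j)%:R : R)).
Proof.
move=> a a' ne t.
have [ht|ht] := eqVneq t a; last by left.
right; apply/eqP; rewrite pnatr_eq0 eqb0; apply/eqP => h; apply: ne.
by apply: val_inj; rewrite /= -ht -h.
Qed.

Theorem corollary9 (R : realType) (X Y : finType) (p : X * Y -> R)
    (n : nat) (pi : X * Y -> 'I_n) :
  is_distr p -> fully_supported p ->
  is_class_clustering p pi ->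
  forall k : X * Y -> nat -> R,
    IIB_solution p (mutinfXY p) k <->
    exists g : 'I_n -> nat -> R,
      is_channel g /\ congruent g /\ forall z t, k z t = g (pi z) t.
Proof.
move=> [p0 psum] pp [surj hcl] k.
have clsOf : forall k', IIB_feasible p (mutinfXY p) k' ->
    forall t z z', 0 < k' z t -> 0 < k' z' t -> pi z = pi z'.
  move=> k' [kch kKL] t z z' kz kz'; apply/hcl.
  by rewrite (suff pp kch kKL kz) (suff pp kch kKL kz').
split.
  move=> [kfeas kmin].
  have cls := clsOf k kfeas.
  have [kch _] := kfeas.
  have [delta [dge [kM dimp]]] := MIN pp kch cls.
  have [g0feas g0val] := GC pp hcl (ind_channel R n) (@ind_congruent R n).
  have := kmin _ g0feas; rewrite g0val kM gerDl => dle.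
  have d0 : delta = 0 by apply/eqP; rewrite eq_le dle dge.
  have const := dimp d0.
  have [k0 kc] := kch.
  exists (fun j t => if [pick z | pi z == j] is Some z then k z t else 0).
  split; [split|split].
  - by move=> j t; case: pickP => [z _|_] //=.
  - move=> j; have [z Hz] := surj j.
    case: pickP => [z' _|none]; first exact: kc.
    by have := none z; rewrite Hz eqxx.
  - move=> a a' ne t /=.
    case: pickP => [z /eqP Hz|_]; last by left.
    case: pickP => [z' /eqP Hz'|_]; last by right.
    have [kz|kn] := eqVneq (k z t) 0; first by left.
    have [kz'|kn'] := eqVneq (k z' t) 0; first by right.
    exfalso; apply: ne; rewrite -Hz -Hz'; apply: (cls t).
      by rewrite lt_def kn k0.
    by rewrite lt_def kn' k0.
  - move=> z t /=; case: pickP => [z' /eqP Hz'|none].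
      exact: const (esym Hz').
    by have := none z; rewrite eqxx.
move=> [g [gch [gcong kg]]].
have ek : k = (fun z t => g (pi z) t).
  by apply/funext => z; apply/funext => t; exact: kg.
rewrite ek.
have [feas val] := GC pp hcl gch gcong.
split => // k' k'feas.
have [k'ch _] := k'feas.
have [delta [dge [kM _]]] := MIN pp k'ch (clsOf k' k'feas).
by rewrite val kM lerDl.
Qed.
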